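(* For every skew shape $\lambda/\mu$ and every $k$, there is a double weight preserving bijection from the set of primed tableaux of shape $\lambda/\mu$ over $X'_k$ to the set of signed tableaux of shape $\lambda/\mu$ over $\bar X_k$.
   Context: A primed tableau of shape $\lambda/\mu$ over $X'_k=\{1'<1<2'<2<\dots<k'<k\}$ is a filling of the skew diagram with rows and columns weakly increasing, at most one $i'$ in each row and at most one $i$ in each column for every $i$; its double weight is $(X,Y)$ where $X(i)$ is the number of entries $i'$ and $Y(i)$ the number of entries $i$. A signed tableau of shape $\lambda/\mu$ over $\bar X_k=\{\bar k<\dots<\bar1<1<\dots<k\}$ is a filling with rows and columns weakly increasing, at most one $\bar i$ in each row and at most one $i$ in each column for every $i$; its double weight is $(X,Y)$ where $X(i)$ is the number of entries $\bar i$ and $Y(i)$ the number of entries $i$. *)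

(* Defs.v *)
From mathcomp Require Import all_boot.
 Unset Strict Implicit. Unset Printing Implicit Defensive.

Definition is_partition (l : seq nat) : bool :=
  sorted geq l && all (fun x => 0 < x) l.

Definition subpart (mu lam : seq nat) : bool :=
  all (fun i => nth 0 mu i <= nth 0 lam i) (iota 0 (size mu)).

(* Cells of lam/mu: (i,j) (row i, column j, 0-based) with mu_i <= j < lam_i.
   Every such cell has i < size lam and j < lam_0. *)
Definition in_skew (lam mu : seq nat) (c : 'I_(size lam) * 'I_(nth 0 lam 0)) : bool :=
  (nth 0 mu c.1 <= c.2) && (c.2 < nth 0 lam c.1).

Definition cell (lam mu : seq nat) := {c : 'I_(size lam) * 'I_(nth 0 lam 0) | in_skew lam mu c}.


Definition row {lam mu : seq nat} (c : cell lam mu) : nat := (val c).1.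
Definition col {lam mu : seq nat} (c : cell lam mu) : nat := (val c).2.

(* Letters: (i, b) with i : 'I_k standing for the integer i+1.
   b = false : the marked letter  ((i+1)' in X'_k,  \bar{i+1} in \bar X_k);
   b = true  : the unmarked letter (i+1). *)
Definition letter (k : nat) := ('I_k * bool)%type.

(* Position of a letter in the total order of X'_k = {1' < 1 < 2' < 2 < ... < k' < k}. *)
Definition primed_key (k : nat) (l : letter k) : nat := 2 * l.1 + l.2.

(* Position of a letter in \bar X_k = {\bar k < ... < \bar 1 < 1 < ... < k}. *)
Definition signed_key (k : nat) (l : letter k) : nat :=
  if l.2 then k + l.1 else k - l.1.+1.

Definition filling (lam mu : seq nat) (k : nat) := {ffun cell lam mu -> letter k}.

Definition is_tableau {lam mu : seq nat} {k : nat} (key : letter k -> nat)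
  (t : filling lam mu k) : bool :=
  [forall c1 : cell lam mu, forall c2 : cell lam mu,
    [&& ((row c1 == row c2) && (col c1 <= col c2)) ==> (key (t c1) <= key (t c2)),
        ((col c1 == col c2) && (row c1 <= row c2)) ==> (key (t c1) <= key (t c2)),
        [&& c1 != c2, row c1 == row c2 & t c1 == t c2] ==> (t c1).2
      & [&& c1 != c2, col c1 == col c2 & t c1 == t c2] ==> ~~ (t c1).2]].

Definition primed_tab (lam mu : seq nat) (k : nat) :=
  {t : filling lam mu k | is_tableau (@primed_key k) t}.

Definition signed_tab (lam mu : seq nat) (k : nat) :=
  {t : filling lam mu k | is_tableau (@signed_key k) t}.

Definition dweight {lam mu : seq nat} {k : nat} (t : filling lam mu k) : {ffun 'I_k -> nat * nat} :=
  [ffun i => (#|[pred c | t c == (i, false)]|, #|[pred c | t c == (i, true)]|)].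

(* Main.v *)
Require Import Defs.
From mathcomp Require Import all_boot zify.
Set Implicit Arguments. Unset Strict Implicit.


Section Geo.
Variables (lam mu : seq nat) (k : nat).
Hypothesis Hlam : is_partition lam.
Hypothesis Hmu : is_partition mu.

Lemma part_mono {l i j} : is_partition l -> i <= j -> nth 0 l j <= nth 0 l i.
Proof.
case/andP=> Hs _ Hij.
case: (ltnP j (size l)) => Hj; last by rewrite nth_default.
have Hi : i < size l by lia.
have := @sorted_leq_nth _ geq (fun x y z h1 h2 => leq_trans h2 h1) (fun x => leqnn x) 0 l Hs i j.
by rewrite !inE; apply.
Qed.

Lemma cellE (c1 c2 : cell lam mu) : row c1 = row c2 -> col c1 = col c2 -> c1 = c2.
Proof.
move: c1 c2 => [[r1 j1] h1] [[r2 j2] h2]; rewrite /row /col /= => Hr Hj.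
apply/val_inj => /=; congr pair; exact/val_inj.
Qed.

Lemma mkcell r j : nth 0 mu r <= j -> j < nth 0 lam r ->
  {c : cell lam mu | row c = r /\ col c = j}.
Proof.
move=> H1 H2.
have Hr : r < size lam.
  by case: (ltnP r (size lam)) => // H; rewrite nth_default in H2.
have Hj : j < nth 0 lam 0 by have := part_mono Hlam (leq0n r); lia.
have Hin : in_skew lam mu (Ordinal Hr, Ordinal Hj) by rewrite /in_skew /= H1 H2.
by exists (@exist _ (in_skew lam mu) _ Hin).
Qed.

Lemma cell_bounds (c : cell lam mu) : nth 0 mu (row c) <= col c < nth 0 lam (row c).
Proof. by case: c => [[r j] /= h]; rewrite /row /col /=; case/andP: h => -> ->. Qed.

Lemma corner_ur {x y : cell lam mu} : row x <= row y -> col x <= col y ->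
  {z : cell lam mu | row z = row x /\ col z = col y}.
Proof.
move=> Hr Hc; apply: mkcell.
  have := cell_bounds x; lia.
have := cell_bounds y; have := part_mono Hlam Hr; lia.
Qed.

Lemma corner_ll {x y : cell lam mu} : row x <= row y -> col x <= col y ->
  {z : cell lam mu | row z = row y /\ col z = col x}.
Proof.
move=> Hr Hc; apply: mkcell.
  have := cell_bounds x; have := part_mono Hmu Hr; lia.
have := cell_bounds y; lia.
Qed.

Section Tab.
Variable key : letter k -> nat.
Variable t : filling lam mu k.
Hypothesis Ht : is_tableau key t.

Lemma tab_row c1 c2 : row c1 = row c2 -> col c1 <= col c2 -> key (t c1) <= key (t c2).
Proof.
move=> H1 H2; move/forallP: Ht => /(_ c1) /forallP /(_ c2) /and4P [h _ _ _].
by apply: (implyP h); rewrite H1 eqxx H2.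
Qed.

Lemma tab_col c1 c2 : col c1 = col c2 -> row c1 <= row c2 -> key (t c1) <= key (t c2).
Proof.
move=> H1 H2; move/forallP: Ht => /(_ c1) /forallP /(_ c2) /and4P [_ h _ _].
by apply: (implyP h); rewrite H1 eqxx H2.
Qed.

Lemma tab_rowS c1 c2 : c1 != c2 -> row c1 = row c2 -> t c1 = t c2 -> (t c1).2.
Proof.
move=> H0 H1 H2; move/forallP: Ht => /(_ c1) /forallP /(_ c2) /and4P [_ _ h _].
by apply: (implyP h); rewrite H0 H1 H2 !eqxx.
Qed.

Lemma tab_colS c1 c2 : c1 != c2 -> col c1 = col c2 -> t c1 = t c2 -> ~~ (t c1).2.
Proof.
move=> H0 H1 H2; move/forallP: Ht => /(_ c1) /forallP /(_ c2) /and4P [_ _ _ h].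
by apply: (implyP h); rewrite H0 H1 H2 !eqxx.
Qed.

Lemma tab_mono c1 c2 : row c1 <= row c2 -> col c1 <= col c2 -> key (t c1) <= key (t c2).
Proof.
move=> Hr Hc; have [z [Hzr Hzc]] := corner_ur Hr Hc.
apply: (@leq_trans (key (t z))); first by apply: tab_row; rewrite ?Hzr ?Hzc.
by apply: tab_col; rewrite ?Hzr ?Hzc.
Qed.

End Tab.
End Geo.

Ltac slia := repeat match goal with
  | H : is_true (leq _ _) |- _ => revert H
  | H : @eq nat _ _ |- _ => revert H
  end; repeat match goal with H : _ |- _ => clear H end; intros; lia.


Section Swap.
Variables (lam mu : seq nat) (k : nat).
Hypothesis Hlam : is_partition lam.
Hypothesis Hmu : is_partition mu.
Local Notation cell := (cell lam mu).
Local Notation filling := (filling lam mu k).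

Variables (key1 key2 : letter k -> nat) (a b : letter k).
Hypothesis Hab1 : key1 b = (key1 a).+1.
Hypothesis Hbtw : forall z, z != a -> z != b -> (key1 z < key1 a) || (key1 b < key1 z).
Hypothesis H2a : key2 a = key1 b.
Hypothesis H2b : key2 b = key1 a.
Hypothesis H2z : forall z, z != a -> z != b -> key2 z = key1 z.

Definition tabpair (key : letter k -> nat) (s : filling) (c1 c2 : cell) : bool :=
    [&& ((row c1 == row c2) && (col c1 <= col c2)) ==> (key (s c1) <= key (s c2)),
        ((col c1 == col c2) && (row c1 <= row c2)) ==> (key (s c1) <= key (s c2)),
        [&& c1 != c2, row c1 == row c2 & s c1 == s c2] ==> (s c1).2
      & [&& c1 != c2, col c1 == col c2 & s c1 == s c2] ==> ~~ (s c1).2].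

Lemma is_tabE key (s : filling) : is_tableau key s = [forall c1, forall c2, tabpair key s c1 c2].
Proof. by []. Qed.

Definition S (t : filling) : {set cell} := [set c | (t c == a) || (t c == b)].

Lemma inSE (t : filling) (c : cell) : (c \in S t) = (t c == a) || (t c == b).
Proof. by rewrite inE. Qed.

Lemma a_neq_b : a != b.
Proof. by apply/eqP => E; move: Hab1; rewrite E; lia. Qed.

Lemma btw_S (t : filling) (c : cell) : key1 a <= key1 (t c) <= key1 b -> c \in S t.
Proof.
move=> /andP[h1 h2]; rewrite inSE.
apply/negPn/negP; rewrite negb_or => /andP[na nb].
by move: (Hbtw na nb); lia.
Qed.

Lemma key1_ab {w : letter k} : (w == a) || (w == b) -> (key1 w == key1 a) || (key1 w == key1 b).
Proof. by case/orP=> /eqP ->; rewrite eqxx ?orbT. Qed.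

Lemma key2_ab {w : letter k} : (w == a) || (w == b) -> (key2 w == key1 a) || (key2 w == key1 b).
Proof. by case/orP=> /eqP ->; rewrite ?H2a ?H2b eqxx ?orbT. Qed.

Lemma out_le {z w w' : letter k} : ~~ ((z == a) || (z == b)) -> (w == a) || (w == b) ->
  (w' == a) || (w' == b) -> key1 z <= key1 w -> key2 z <= key2 w'.
Proof.
rewrite negb_or => /andP[na nb] hw hw'; rewrite (H2z na nb).
have k1 := key1_ab hw; have k2 := key2_ab hw'; have hb := Hbtw na nb.
by case/orP: hb => hb; case/orP: k1 => /eqP k1; case/orP: k2 => /eqP k2; lia.
Qed.

Lemma out_ge {z w w' : letter k} : ~~ ((z == a) || (z == b)) -> (w == a) || (w == b) ->
  (w' == a) || (w' == b) -> key1 w <= key1 z -> key2 w' <= key2 z.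
Proof.
rewrite negb_or => /andP[na nb] hw hw'; rewrite (H2z na nb).
have k1 := key1_ab hw; have k2 := key2_ab hw'; have hb := Hbtw na nb.
by case/orP: hb => hb; case/orP: k1 => /eqP k1; case/orP: k2 => /eqP k2; lia.
Qed.

Lemma tab_transfer (t s : filling) : is_tableau key1 t ->
  (forall c, c \notin S t -> s c = t c) ->
  (forall c, c \in S t -> (s c == a) || (s c == b)) ->
  (forall c1 c2, c1 \in S t -> c2 \in S t -> tabpair key2 s c1 c2) ->
  is_tableau key2 s.
Proof.
move=> Ht Hout Hin Hinner; rewrite is_tabE; apply/forallP => c1; apply/forallP => c2.
case: (boolP (c1 \in S t)) => h1; case: (boolP (c2 \in S t)) => h2.
- exact: Hinner.
- have e2 := Hout _ h2; have s1 := Hin _ h1; move: (h1) (h2); rewrite !inSE => t1 t2.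
  have ns : s c1 != s c2.
    by apply/eqP => E; rewrite E e2 in s1; rewrite s1 in t2.
  rewrite /tabpair (negPf ns) !andbF /= ?andbT; apply/andP; split; apply/implyP => /andP[/eqP hr hc].
  + rewrite e2; apply: (out_ge t2 t1 s1); exact: tab_row.
  + rewrite e2; apply: (out_ge t2 t1 s1); exact: tab_col.
- have e1 := Hout _ h1; have s2 := Hin _ h2; move: (h1) (h2); rewrite !inSE => t1 t2.
  have ns : s c1 != s c2.
    by apply/eqP => E; rewrite -E e1 in s2; rewrite s2 in t1.
  rewrite /tabpair (negPf ns) !andbF /= ?andbT; apply/andP; split; apply/implyP => /andP[/eqP hr hc].
  + rewrite e1; apply: (out_le t1 t2 s2); exact: tab_row.
  + rewrite e1; apply: (out_le t1 t2 s2); exact: tab_col.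
- rewrite /tabpair (Hout _ h1) (Hout _ h2).
  move: (h1) (h2); rewrite !inSE => t1 t2.
  have E : forall z, ~~ ((z == a) || (z == b)) -> key2 z = key1 z.
    by move=> z; rewrite negb_or => /andP[]; apply: H2z.
  rewrite (E _ t1) (E _ t2).
  by move: Ht; rewrite is_tabE => /forallP /(_ c1) /forallP /(_ c2).
Qed.

End Swap.


Section Count.
Variables (T I : finType) (S : {set T}) (pi : T -> I) (h : T -> nat).
Hypothesis Hinj : forall x y, pi x = pi y -> h x = h y -> x = y.

Definition Gt := [set c in S | [exists c', (c' \in S) && (pi c' == pi c) && (h c < h c')]].
Definition Lt := [set c in S | [exists c', (c' \in S) && (pi c' == pi c) && (h c' < h c)]].

Lemma card_notGt : #|S :\: Gt| = #|pi @: S|.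
Proof.
rewrite -(@card_in_imset _ _ pi).
  have -> : pi @: (S :\: Gt) = pi @: S; last by [].
  apply/setP => i; apply/imsetP/imsetP => [[x Hx ->]|[x Hx ->]].
    by exists x => //; move: Hx; rewrite !inE => /andP[].
  have Px : (x \in S) && (pi x == pi x) by rewrite Hx eqxx.
  case: (@arg_maxnP _ x [pred y | (y \in S) && (pi y == pi x)] h Px) => y /andP[Sy /eqP piy] Hy.
  exists y; last by rewrite piy.
  rewrite !inE Sy andbT; apply/negP => /andP[_ /existsP[z /andP[/andP[Sz /eqP pz] hz]]].
  have := Hy z; rewrite inE Sz pz piy eqxx => /(_ isT) /=; lia.
move=> x y; rewrite !inE => /andP[nx Sx] /andP[ny Sy] pxy.
apply: Hinj => //; case: (ltngtP (h x) (h y)) => // hxy.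
  by case/negP: nx; rewrite Sx; apply/existsP; exists y; rewrite Sy pxy eqxx hxy.
by case/negP: ny; rewrite Sy; apply/existsP; exists x; rewrite Sx pxy eqxx hxy.
Qed.

Lemma card_notLt : #|S :\: Lt| = #|pi @: S|.
Proof.
rewrite -(@card_in_imset _ _ pi).
  have -> : pi @: (S :\: Lt) = pi @: S; last by [].
  apply/setP => i; apply/imsetP/imsetP => [[x Hx ->]|[x Hx ->]].
    by exists x => //; move: Hx; rewrite !inE => /andP[].
  have Px : (x \in S) && (pi x == pi x) by rewrite Hx eqxx.
  case: (@arg_minnP _ x [pred y | (y \in S) && (pi y == pi x)] h Px) => y /andP[Sy /eqP piy] Hy.
  exists y; last by rewrite piy.
  rewrite !inE Sy andbT; apply/negP => /andP[_ /existsP[z /andP[/andP[Sz /eqP pz] hz]]].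
  have := Hy z; rewrite inE Sz pz piy eqxx => /(_ isT) /=; lia.
move=> x y; rewrite !inE => /andP[nx Sx] /andP[ny Sy] pxy.
apply: Hinj => //; case: (ltngtP (h x) (h y)) => // hxy.
  by case/negP: ny; rewrite Sy; apply/existsP; exists x; rewrite Sx pxy eqxx hxy.
by case/negP: nx; rewrite Sx; apply/existsP; exists y; rewrite Sy pxy eqxx hxy.
Qed.

Lemma card_Gt_Lt : #|Gt| = #|Lt|.
Proof.
have sG : Gt \subset S by apply/subsetP => x; rewrite inE => /andP[].
have sL : Lt \subset S by apply/subsetP => x; rewrite inE => /andP[].
have e1 := cardsD S Gt; have e2 := cardsD S Lt.
rewrite (setIidPr sG) in e1; rewrite (setIidPr sL) in e2.
rewrite card_notGt in e1; rewrite card_notLt in e2.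
have := subset_leq_card sG; have := subset_leq_card sL; lia.
Qed.

Lemma GtI c c' : c \in S -> c' \in S -> pi c' = pi c -> h c < h c' -> c \in Gt.
Proof. by move=> h1 h2 e l; rewrite inE h1; apply/existsP; exists c'; rewrite h2 e eqxx l. Qed.
Lemma LtI c c' : c \in S -> c' \in S -> pi c' = pi c -> h c' < h c -> c \in Lt.
Proof. by move=> h1 h2 e l; rewrite inE h1; apply/existsP; exists c'; rewrite h2 e eqxx l. Qed.
Lemma GtE c : c \in Gt -> exists c', [/\ c' \in S, pi c' = pi c & h c < h c'].
Proof. by rewrite inE => /andP[_ /existsP[c' /andP[/andP[h1 /eqP h2] h3]]]; exists c'. Qed.
Lemma LtE c : c \in Lt -> exists c', [/\ c' \in S, pi c' = pi c & h c' < h c].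
Proof. by rewrite inE => /andP[_ /existsP[c' /andP[/andP[h1 /eqP h2] h3]]]; exists c'. Qed.
Lemma GtS c : c \in Gt -> c \in S.
Proof. by rewrite inE => /andP[]. Qed.
Lemma LtS c : c \in Lt -> c \in S.
Proof. by rewrite inE => /andP[]. Qed.
End Count.


Section Transport.
Variables (T : finType) (U : eqType).

Definition tr (X Y : {set T}) (c : T) : T := nth c (enum Y) (index c (enum X)).

Lemma tr_in (X Y : {set T}) (c : T) : #|X| = #|Y| -> c \in X -> tr X Y c \in Y.
Proof.
move=> HXY Hc; rewrite /tr -mem_enum; apply: mem_nth.
by rewrite -cardE -HXY cardE index_mem mem_enum.
Qed.

Lemma tr_K (X Y : {set T}) (c : T) : #|X| = #|Y| -> c \in X -> tr Y X (tr X Y c) = c.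
Proof.
move=> HXY Hc; rewrite /tr index_uniq ?enum_uniq //.
  by rewrite nth_index // mem_enum.
by rewrite -cardE -HXY cardE index_mem mem_enum.
Qed.

Definition pm (A : {set T}) (psi : T -> T) (t : {ffun T -> U}) : {ffun T -> U} :=
  [ffun c => if c \in A then t (psi c) else t c].

Lemma pm_in (A : {set T}) psi t (c : T) : c \in A -> pm A psi t c = t (psi c).
Proof. by rewrite /pm ffunE => ->. Qed.

Lemma pm_out (A : {set T}) psi t (c : T) : c \notin A -> pm A psi t c = t c.
Proof. by rewrite /pm ffunE => /negPf ->. Qed.

Lemma pm_K (A : {set T}) (psi psi' : T -> T) (t : {ffun T -> U}) : (forall c, c \in A -> psi' c \in A) ->
  (forall c, c \in A -> psi (psi' c) = c) -> pm A psi' (pm A psi t) = t.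
Proof.
move=> H1 H2; apply/ffunP => c; case: (boolP (c \in A)) => Hc.
  by rewrite pm_in // pm_in ?H1 // H2.
by rewrite !pm_out.
Qed.

Lemma pm_count (A : {set T}) (psi psi' : T -> T) (t : {ffun T -> U}) (x : U) :
  (forall c, c \in A -> psi c \in A) -> (forall c, c \in A -> psi' c \in A) ->
  (forall c, c \in A -> psi (psi' c) = c) -> (forall c, c \in A -> psi' (psi c) = c) ->
  #|[set c | pm A psi t c == x]| = #|[set c | t c == x]|.
Proof.
move=> H1 H1' H2 H2'.
rewrite -(cardsID A [set c | pm A psi t c == x]) -(cardsID A [set c | t c == x]).
congr addn.
  set D := [set c | pm A psi t c == x] :&: A.
  rewrite -(@card_in_imset _ _ psi D).
    apply: eq_card => d; rewrite !inE.
    apply/imsetP/andP => [[c] |[hd hA]].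
      by rewrite !inE => /andP[/eqP hc cA] ->; rewrite -hc pm_in // H1.
    exists (psi' d); last by rewrite H2.
    by rewrite !inE pm_in ?H1' // H2 // hd.
  move=> c1 c2; rewrite !inE => /andP[_ h1] /andP[_ h2] E.
  by rewrite -(H2' _ h1) -(H2' _ h2) E.
apply: eq_card => d; rewrite !inE.
case: (boolP (d \in A)) => //= hd; by rewrite pm_out.
Qed.
End Transport.


Section Rules.
Variables (lam mu : seq nat) (k : nat).
Local Notation cell := (cell lam mu).
Local Notation filling := (filling lam mu k).
Variables (key : letter k -> nat) (x y : letter k) (s : filling) (A : {set cell}).
Hypothesis Hs : is_tableau key s.
Hypothesis HA : forall c, c \in A -> (s c == x) || (s c == y).
Hypothesis Hxy : key x < key y.

Lemma cell_neq (c c' : cell) : col c < col c' -> c != c'.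
Proof. by apply: contraTneq => ->; rewrite ltnn. Qed.

Lemma cell_neqr (c c' : cell) : row c < row c' -> c != c'.
Proof. by apply: contraTneq => ->; rewrite ltnn. Qed.

Lemma rule_right c c' : y.2 = false -> c \in A -> c' \in A -> row c' = row c ->
  col c < col c' -> s c = x.
Proof.
move=> hy hc hc' hr hcc; case/orP: (HA hc) => /eqP e //.
have hk := tab_row Hs (esym hr) (ltnW hcc).
case/orP: (HA hc') => /eqP e'; first by rewrite e e' in hk; lia.
have := tab_rowS Hs (cell_neq hcc) (esym hr) (etrans e (esym e')).
by rewrite e hy.
Qed.

Lemma rule_left c c' : x.2 = false -> c \in A -> c' \in A -> row c' = row c ->
  col c' < col c -> s c = y.
Proof.
move=> hx hc hc' hr hcc; case/orP: (HA hc) => /eqP e //.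
have hk := tab_row Hs hr (ltnW hcc).
case/orP: (HA hc') => /eqP e'; last by rewrite e e' in hk; lia.
have := tab_rowS Hs (cell_neq hcc) hr (etrans e' (esym e)).
by rewrite e' hx.
Qed.

Lemma rule_above c c' : x.2 = true -> c \in A -> c' \in A -> col c' = col c ->
  row c' < row c -> s c = y.
Proof.
move=> hx hc hc' hr hcc; case/orP: (HA hc) => /eqP e //.
have hk := tab_col Hs hr (ltnW hcc).
case/orP: (HA hc') => /eqP e'; last by rewrite e e' in hk; lia.
have := tab_colS Hs (cell_neqr hcc) hr (etrans e' (esym e)).
by rewrite e' hx.
Qed.

Lemma rule_below c c' : y.2 = true -> c \in A -> c' \in A -> col c' = col c ->
  row c < row c' -> s c = x.
Proof.
move=> hy hc hc' hr hcc; case/orP: (HA hc) => /eqP e //.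
have hk := tab_col Hs (esym hr) (ltnW hcc).
case/orP: (HA hc') => /eqP e'; first by rewrite e e' in hk; lia.
have := tab_colS Hs (cell_neqr hcc) (esym hr) (etrans e (esym e')).
by rewrite e hy.
Qed.
End Rules.

Section Inner.
Variables (lam mu : seq nat) (k : nat).
Local Notation cell := (cell lam mu).
Local Notation filling := (filling lam mu k).
Variables (key : letter k -> nat) (s : filling) (A : {set cell}).
Hypothesis Hrow : forall c1 c2, c1 \in A -> c2 \in A -> row c1 = row c2 -> col c1 < col c2 ->
  key (s c1) <= key (s c2) /\ (s c1 = s c2 -> (s c1).2).
Hypothesis Hcol : forall c1 c2, c1 \in A -> c2 \in A -> col c1 = col c2 -> row c1 < row c2 ->
  key (s c1) <= key (s c2) /\ (s c1 = s c2 -> ~~ (s c1).2).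

Lemma inner_tab c1 c2 : c1 \in A -> c2 \in A -> tabpair key s c1 c2.
Proof.
move=> h1 h2; rewrite /tabpair.
case: (boolP (c1 == c2)) => [/eqP <-|ne]; first by rewrite !leqnn !implybT eqxx.
rewrite /=; apply/and4P; split; apply/implyP.
- case/andP=> /eqP hr; rewrite leq_eqVlt => /orP[/eqP hc|hc].
    by case/eqP: ne; apply: cellE.
  by case: (Hrow h1 h2 hr hc).
- case/andP=> /eqP hc; rewrite leq_eqVlt => /orP[/eqP hr|hr].
    by case/eqP: ne; apply: cellE.
  by case: (Hcol h1 h2 hc hr).
- case/andP=> /eqP hr /eqP he.
  case: (ltngtP (col c1) (col c2)) => hc.
  + by case: (Hrow h1 h2 hr hc) => _; apply.
  + by case: (Hrow h2 h1 (esym hr) hc) => _ H; rewrite he H.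
  + by case/eqP: ne; apply: cellE.
- case/andP=> /eqP hc /eqP he.
  case: (ltngtP (row c1) (row c2)) => hr.
  + by case: (Hcol h1 h2 hc hr) => _; apply.
  + by case: (Hcol h2 h1 (esym hc) hr) => _ H; rewrite he H.
  + by case/eqP: ne; apply: cellE.
Qed.
End Inner.


Section Common.
Variables (lam mu : seq nat) (k : nat).
Local Notation cell := (cell lam mu).
Local Notation filling := (filling lam mu k).

Definition rowo (c : cell) : 'I_(size lam) := (val c).1.
Definition colo (c : cell) : 'I_(nth 0 lam 0) := (val c).2.

Lemma rowoE (c c' : cell) : (rowo c' = rowo c) <-> (row c' = row c).
Proof. split=> h; last exact: val_inj. by move: h; rewrite /rowo /colo /row /col => ->. Qed.
Lemma coloE (c c' : cell) : (colo c' = colo c) <-> (col c' = col c).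
Proof. split=> h; last exact: val_inj. by move: h; rewrite /rowo /colo /row /col => ->. Qed.

Lemma inj_r (x y : cell) : rowo x = rowo y -> col x = col y -> x = y.
Proof. by move=> /rowoE h1 h2; apply: cellE. Qed.
Lemma inj_c (x y : cell) : colo x = colo y -> row x = row y -> x = y.
Proof. by move=> /coloE h1 h2; apply: cellE. Qed.

Definition RS (A : {set cell}) := Gt A rowo (@col lam mu).
Definition LS (A : {set cell}) := Lt A rowo (@col lam mu).
Definition DS (A : {set cell}) := Gt A colo (@row lam mu).
Definition US (A : {set cell}) := Lt A colo (@row lam mu).

Lemma RS_LS (A : {set cell}) : #|RS A| = #|LS A|.
Proof. exact: card_Gt_Lt inj_r. Qed.
Lemma DS_US (A : {set cell}) : #|DS A| = #|US A|.
Proof. exact: card_Gt_Lt inj_c. Qed.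

Lemma RSI (A : {set cell}) (c c' : cell) : c \in A -> c' \in A -> row c' = row c -> col c < col c' -> c \in RS A.
Proof. by move=> h1 h2 /rowoE e l; apply: GtI h2 e l. Qed.
Lemma LSI (A : {set cell}) (c c' : cell) : c \in A -> c' \in A -> row c' = row c -> col c' < col c -> c \in LS A.
Proof. by move=> h1 h2 /rowoE e l; apply: LtI h2 e l. Qed.
Lemma DSI (A : {set cell}) (c c' : cell) : c \in A -> c' \in A -> col c' = col c -> row c < row c' -> c \in DS A.
Proof. by move=> h1 h2 /coloE e l; apply: GtI h2 e l. Qed.
Lemma USI (A : {set cell}) (c c' : cell) : c \in A -> c' \in A -> col c' = col c -> row c' < row c -> c \in US A.
Proof. by move=> h1 h2 /coloE e l; apply: LtI h2 e l. Qed.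

Lemma RSE (A : {set cell}) (c : cell) : c \in RS A -> exists c', [/\ c' \in A, row c' = row c & col c < col c'].
Proof. by case/GtE => c' [h1 /rowoE h2 h3]; exists c'. Qed.
Lemma LSE (A : {set cell}) (c : cell) : c \in LS A -> exists c', [/\ c' \in A, row c' = row c & col c' < col c].
Proof. by case/LtE => c' [h1 /rowoE h2 h3]; exists c'. Qed.
Lemma DSE (A : {set cell}) (c : cell) : c \in DS A -> exists c', [/\ c' \in A, col c' = col c & row c < row c'].
Proof. by case/GtE => c' [h1 /coloE h2 h3]; exists c'. Qed.
Lemma USE (A : {set cell}) (c : cell) : c \in US A -> exists c', [/\ c' \in A, col c' = col c & row c' < row c].
Proof. by case/LtE => c' [h1 /coloE h2 h3]; exists c'. Qed.

Lemma RS_sub (A : {set cell}) (c : cell) : c \in RS A -> c \in A. Proof. exact: GtS. Qed.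
Lemma LS_sub (A : {set cell}) (c : cell) : c \in LS A -> c \in A. Proof. exact: LtS. Qed.
Lemma DS_sub (A : {set cell}) (c : cell) : c \in DS A -> c \in A. Proof. exact: GtS. Qed.
Lemma US_sub (A : {set cell}) (c : cell) : c \in US A -> c \in A. Proof. exact: LtS. Qed.

Lemma S_sym (a b : letter k) (t : filling) : S a b t = S b a t.
Proof. by apply/setP => c; rewrite !inE orbC. Qed.

Lemma S_pm (a b : letter k) (t : filling) psi :
  (forall c, c \in S a b t -> psi c \in S a b t) -> S a b (pm (S a b t) psi t) = S a b t.
Proof.
move=> H; apply/setP => c; case: (boolP (c \in S a b t)) => hc.
  by rewrite inSE pm_in // -inSE H.
by rewrite inSE pm_out // -inSE (negPf hc).
Qed.

End Common.


Section PsiGen.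
Variables (lam mu : seq nat) (k : nat).
Local Notation cell := (cell lam mu).
Local Notation filling := (filling lam mu k).

Definition Fsrc (A : {set cell}) := A :\: (RS A :|: US A).
Definition Ftgt (A : {set cell}) := A :\: (LS A :|: DS A).

Definition psif (A : {set cell}) (c : cell) : cell :=
  if c \in LS A then tr (LS A) (RS A) c else if c \in DS A then tr (DS A) (US A) c
  else tr (Ftgt A) (Fsrc A) c.
Definition psig (A : {set cell}) (c : cell) : cell :=
  if c \in RS A then tr (RS A) (LS A) c else if c \in US A then tr (US A) (DS A) c
  else tr (Fsrc A) (Ftgt A) c.

Variable A : {set cell}.
Hypothesis dRU : forall c, c \in RS A -> c \notin US A.
Hypothesis dLD : forall c, c \in LS A -> c \notin DS A.

Lemma card_disj (X Y : {set cell}) : X \subset A -> Y \subset A ->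
  (forall c, c \in X -> c \notin Y) -> #|A :\: (X :|: Y)| = #|A| - (#|X| + #|Y|).
Proof.
move=> sX sY d; rewrite cardsD (setIidPr _); last by rewrite subUset sX.
rewrite cardsU; have -> : X :&: Y = set0.
  by apply/setP => c; rewrite !inE; case: (boolP (c \in X)) => // /d /negPf ->.
by rewrite cards0 subn0.
Qed.

Lemma subRS : RS A \subset A. Proof. by apply/subsetP => c /RS_sub. Qed.
Lemma subLS : LS A \subset A. Proof. by apply/subsetP => c /LS_sub. Qed.
Lemma subDS : DS A \subset A. Proof. by apply/subsetP => c /DS_sub. Qed.
Lemma subUS : US A \subset A. Proof. by apply/subsetP => c /US_sub. Qed.

Lemma card_F : #|Fsrc A| = #|Ftgt A|.
Proof.
rewrite /Fsrc /Ftgt !card_disj ?subRS ?subLS ?subDS ?subUS //.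
by rewrite RS_LS -DS_US addnC.
Qed.

Lemma inF1 c : (c \in Fsrc A) = [&& c \notin RS A, c \notin US A & c \in A].
Proof. by rewrite !inE negb_or andbA. Qed.
Lemma inF2 c : (c \in Ftgt A) = [&& c \notin LS A, c \notin DS A & c \in A].
Proof. by rewrite !inE negb_or andbA. Qed.

Lemma psi_props c : c \in A ->
  [/\ psif A c \in A, psig A c \in A, psif A (psig A c) = c & psig A (psif A c) = c].
Proof.
move=> hc.
have e1 := RS_LS A; have e2 := DS_US A; have e3 := card_F.
split.
- rewrite /psif; case: ifP => h1; first exact/RS_sub/tr_in.
  case: ifP => h2; first exact/US_sub/(tr_in _ h2).
  have : tr (Ftgt A) (Fsrc A) c \in Fsrc A by apply: tr_in; rewrite // inF2 h1 h2 hc.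
  by rewrite inF1 => /and3P[].
- rewrite /psig; case: ifP => h1; first exact/LS_sub/tr_in.
  case: ifP => h2; first exact/DS_sub/(tr_in _ h2).
  have : tr (Fsrc A) (Ftgt A) c \in Ftgt A by apply: tr_in; rewrite // inF1 h1 h2 hc.
  by rewrite inF2 => /and3P[].
- rewrite /psig; case: ifP => h1.
    have h := tr_in e1 h1.
    by rewrite /psif h tr_K.
  case: ifP => h2.
    have h := tr_in (esym e2) h2.
    have nL : tr (US A) (DS A) c \notin LS A by apply/negP => /dLD; rewrite h.
    by rewrite /psif (negPf nL) h tr_K.
  have hf : c \in Fsrc A by rewrite inF1 h1 h2 hc.
  have h := tr_in e3 hf; move: (h); rewrite inF2 => /and3P[n1 n2 _].
  by rewrite /psif (negPf n1) (negPf n2) tr_K.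
- rewrite /psif; case: ifP => h1.
    have h := tr_in (esym e1) h1.
    by rewrite /psig h tr_K.
  case: ifP => h2.
    have h := tr_in e2 h2.
    have nR : tr (DS A) (US A) c \notin RS A by apply/negP => /dRU; rewrite h.
    by rewrite /psig (negPf nR) h tr_K.
  have hf : c \in Ftgt A by rewrite inF2 h1 h2 hc.
  have h := tr_in (esym e3) hf; move: (h); rewrite inF1 => /and3P[n1 n2 _].
  by rewrite /psig (negPf n1) (negPf n2) tr_K.
Qed.
End PsiGen.


Section UM.
Variables (lam mu : seq nat) (k : nat).
Hypothesis Hlam : is_partition lam.
Hypothesis Hmu : is_partition mu.
Local Notation cell := (cell lam mu).
Local Notation filling := (filling lam mu k).

Variables (key1 key2 : letter k -> nat) (a b : letter k).
Hypothesis Hab1 : key1 b = (key1 a).+1.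
Hypothesis Hbtw : forall z, z != a -> z != b -> (key1 z < key1 a) || (key1 b < key1 z).
Hypothesis H2a : key2 a = key1 b.
Hypothesis H2b : key2 b = key1 a.
Hypothesis H2z : forall z, z != a -> z != b -> key2 z = key1 z.
Hypothesis Ha : a.2 = true.
Hypothesis Hb : b.2 = false.

Lemma Hab1' : key2 a = (key2 b).+1.
Proof. by rewrite H2a H2b. Qed.
Lemma Hbtw' z : z != b -> z != a -> (key2 z < key2 b) || (key2 a < key2 z).
Proof. by move=> h1 h2; rewrite H2z // H2a H2b; apply: Hbtw. Qed.
Lemma H2z' z : z != b -> z != a -> key1 z = key2 z.
Proof. by move=> h1 h2; rewrite H2z. Qed.

Lemma H2a' : key1 b = key2 a. Proof. by rewrite H2a. Qed.
Lemma H2b' : key1 a = key2 b. Proof. by rewrite H2b. Qed.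

Lemma inS1 (t : filling) c : key1 a <= key1 (t c) <= key1 b -> c \in S a b t.
Proof. exact: (btw_S Hlam Hmu Hab1 Hbtw H2a H2b). Qed.
Lemma inS2 (t : filling) c : key2 b <= key2 (t c) <= key2 a -> c \in S a b t.
Proof. by move=> h; rewrite S_sym; exact: (btw_S Hlam Hmu Hab1' Hbtw' H2a' H2b'). Qed.

Lemma key1_in (t : filling) c : c \in S a b t -> key1 a <= key1 (t c) <= key1 b.
Proof. by rewrite inSE => /orP[] /eqP ->; rewrite Hab1 leqnn ?leqnSn. Qed.
Lemma key2_in (t : filling) c : c \in S a b t -> key2 b <= key2 (t c) <= key2 a.
Proof. by rewrite inSE => /orP[] /eqP ->; rewrite H2a H2b Hab1 leqnn ?leqnSn. Qed.

Lemma HAt (t : filling) c : c \in S a b t -> (t c == a) || (t c == b).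
Proof. by rewrite inSE. Qed.
Lemma HAs (t : filling) c : c \in S a b t -> (t c == b) || (t c == a).
Proof. by rewrite inSE orbC. Qed.
Lemma k1ab : key1 a < key1 b. Proof. by rewrite Hab1. Qed.
Lemma k2ba : key2 b < key2 a. Proof. by rewrite H2a H2b Hab1. Qed.

Section T.
Variable t : filling.
Hypothesis Ht : is_tableau key1 t.
Local Notation A := (S a b t).

Lemma ruleR_t c : c \in RS A -> t c = a.
Proof.
move=> hc; have [c' [h1 h2 h3]] := RSE hc.
exact: (rule_right Ht (@HAt t) k1ab Hb (RS_sub hc) h1 h2 h3).
Qed.
Lemma ruleU_t c : c \in US A -> t c = b.
Proof.
move=> hc; have [c' [h1 h2 h3]] := USE hc.
exact: (rule_above Ht (@HAt t) k1ab Ha (US_sub hc) h1 h2 h3).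
Qed.
Lemma dis1 c : c \in RS A -> c \notin US A.
Proof.
move=> h; apply/negP => /ruleU_t; rewrite (ruleR_t h) => e.
by move: Hab1; rewrite e; slia.
Qed.
Lemma dis2 c : c \in LS A -> c \notin DS A.
Proof.
move=> hL; apply/negP => hD.
have [w [hw1 hw2 hw3]] := LSE hL; have [d [hd1 hd2 hd3]] := DSE hD.
have r1 : row w <= row d by slia.
have c1 : col w <= col d by slia.
have [z [hz1 hz2]] := corner_ll Hlam Hmu r1 c1.
have zA : z \in A.
  have [k1 _] := andP (key1_in hw1); have [_ k2] := andP (key1_in hd1).
  have m1 : key1 (t w) <= key1 (t z) by apply: (tab_mono Hlam Hmu Ht); rewrite ?hz1 ?hz2.
  have m2 : key1 (t z) <= key1 (t d) by apply: (tab_mono Hlam Hmu Ht); rewrite ?hz1 ?hz2.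
  apply: inS1; rewrite (leq_trans k1 m1) (leq_trans m2 k2) //.
have e1 : t z = a by apply: ruleR_t; apply: (RSI zA hd1); slia.
have e2 : t z = b by apply: ruleU_t; apply: (USI zA hw1); slia.
by move: Hab1; rewrite -e1 -e2; slia.
Qed.
End T.

Section S2.
Variable t : filling.
Hypothesis Ht : is_tableau key2 t.
Local Notation A := (S a b t).

Lemma ruleL_s c : c \in LS A -> t c = a.
Proof.
move=> hc; have [c' [h1 h2 h3]] := LSE hc.
exact: (rule_left Ht (@HAs t) k2ba Hb (LS_sub hc) h1 h2 h3).
Qed.
Lemma ruleD_s c : c \in DS A -> t c = b.
Proof.
move=> hc; have [c' [h1 h2 h3]] := DSE hc.
exact: (rule_below Ht (@HAs t) k2ba Ha (DS_sub hc) h1 h2 h3).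
Qed.
Lemma dis3 c : c \in LS A -> c \notin DS A.
Proof.
move=> h; apply/negP => /ruleD_s; rewrite (ruleL_s h) => e.
by move: Hab1; rewrite e; slia.
Qed.
Lemma dis4 c : c \in RS A -> c \notin US A.
Proof.
move=> hR; apply/negP => hU.
have [w [hw1 hw2 hw3]] := RSE hR; have [u [hu1 hu2 hu3]] := USE hU.
have r1 : row u <= row w by slia.
have c1 : col u <= col w by slia.
have [z [hz1 hz2]] := corner_ur Hlam Hmu r1 c1.
have zA : z \in A.
  have [k1 _] := andP (key2_in hu1); have [_ k2] := andP (key2_in hw1).
  have m1 : key2 (t u) <= key2 (t z) by apply: (tab_mono Hlam Hmu Ht); rewrite ?hz1 ?hz2.
  have m2 : key2 (t z) <= key2 (t w) by apply: (tab_mono Hlam Hmu Ht); rewrite ?hz1 ?hz2.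
  apply: inS2; rewrite (leq_trans k1 m1) (leq_trans m2 k2) //.
have e1 : t z = a by apply: ruleL_s; apply: (LSI zA hu1); slia.
have e2 : t z = b by apply: ruleD_s; apply: (DSI zA hw1); slia.
by move: Hab1; rewrite -e1 -e2; slia.
Qed.
End S2.

Definition fUM (t : filling) : filling := pm (S a b t) (psif (S a b t)) t.
Definition gUM (t : filling) : filling := pm (S a b t) (psig (S a b t)) t.

Lemma fUM_S t : is_tableau key1 t -> S a b (fUM t) = S a b t.
Proof.
move=> Ht; apply: S_pm => c hc.
by case: (psi_props (@dis1 t Ht) (@dis2 t Ht) hc).
Qed.
Lemma gUM_S t : is_tableau key2 t -> S a b (gUM t) = S a b t.
Proof.
move=> Ht; apply: S_pm => c hc.
by case: (psi_props (@dis4 t Ht) (@dis3 t Ht) hc).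
Qed.

Lemma gfUM t : is_tableau key1 t -> gUM (fUM t) = t.
Proof.
move=> Ht; rewrite /gUM fUM_S // /fUM; apply: pm_K => c hc.
  by case: (psi_props (@dis1 t Ht) (@dis2 t Ht) hc).
by case: (psi_props (@dis1 t Ht) (@dis2 t Ht) hc).
Qed.
Lemma fgUM t : is_tableau key2 t -> fUM (gUM t) = t.
Proof.
move=> Ht; rewrite /fUM gUM_S // /gUM; apply: pm_K => c hc.
  by case: (psi_props (@dis4 t Ht) (@dis3 t Ht) hc).
by case: (psi_props (@dis4 t Ht) (@dis3 t Ht) hc).
Qed.

Lemma fUM_count t x : is_tableau key1 t ->
  #|[set c | fUM t c == x]| = #|[set c | t c == x]|.
Proof.
move=> Ht; apply: (pm_count (psi' := psig (S a b t))) => c hc;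
  by case: (psi_props (@dis1 t Ht) (@dis2 t Ht) hc).
Qed.
Lemma gUM_count t x : is_tableau key2 t ->
  #|[set c | gUM t c == x]| = #|[set c | t c == x]|.
Proof.
move=> Ht; apply: (pm_count (psi' := psif (S a b t))) => c hc;
  by case: (psi_props (@dis4 t Ht) (@dis3 t Ht) hc).
Qed.

Lemma fUM_tab t : is_tableau key1 t -> is_tableau key2 (fUM t).
Proof.
move=> Ht.
have d1 := @dis1 t Ht; have d2 := @dis2 t Ht.
have sin c : c \in S a b t -> (fUM t c == a) || (fUM t c == b).
  by move=> hc; rewrite /fUM pm_in // -inSE; case: (psi_props d1 d2 hc).
apply: (tab_transfer Hlam Hmu Hab1 Hbtw H2a H2b H2z Ht).
- by move=> c hc; rewrite /fUM pm_out.
- exact: sin.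
move=> c1 c2 h1 h2.
have Hrow : forall c1 c2, c1 \in S a b t -> c2 \in S a b t -> row c1 = row c2 -> col c1 < col c2 ->
    key2 (fUM t c1) <= key2 (fUM t c2) /\ (fUM t c1 = fUM t c2 -> (fUM t c1).2).
  move=> x y hx hy hr hc.
  have hL : y \in LS (S a b t) by apply: (LSI hy hx).
  have e2 : fUM t y = a.
    rewrite /fUM pm_in // /psif hL; apply: ruleR_t => //; apply: tr_in => //; by rewrite RS_LS.
  rewrite e2; split; last by move=> ->.
  by case/orP: (sin _ hx) => /eqP ->; rewrite ?H2a ?H2b ?Hab1.
have Hcol : forall c1 c2, c1 \in S a b t -> c2 \in S a b t -> col c1 = col c2 -> row c1 < row c2 ->
    key2 (fUM t c1) <= key2 (fUM t c2) /\ (fUM t c1 = fUM t c2 -> ~~ (fUM t c1).2).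
  move=> x y hx hy hc hr.
  have hD : x \in DS (S a b t) by apply: (DSI hx hy).
  have nL : x \notin LS (S a b t) by apply/negP => /d2; rewrite hD.
  have e1 : fUM t x = b.
    rewrite /fUM pm_in // /psif (negPf nL) hD; apply: ruleU_t => //; apply: tr_in => //; by rewrite DS_US.
  rewrite e1 Hb; split => //.
  by case/orP: (sin _ hy) => /eqP ->; rewrite ?H2a ?H2b ?Hab1.
exact: (@inner_tab _ _ _ key2 (fUM t) (S a b t) Hrow Hcol c1 c2 h1 h2).
Qed.

Lemma gUM_tab t : is_tableau key2 t -> is_tableau key1 (gUM t).
Proof.
move=> Ht.
have d3 := @dis3 t Ht; have d4 := @dis4 t Ht.
have sin c : c \in S a b t -> (gUM t c == b) || (gUM t c == a).
  by move=> hc; rewrite /gUM pm_in // orbC -inSE; case: (psi_props d4 d3 hc).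
apply: (tab_transfer Hlam Hmu Hab1' Hbtw' H2a' H2b' H2z' Ht); rewrite -S_sym.
- by move=> c hc; rewrite /gUM pm_out.
- exact: sin.
move=> c1 c2 h1 h2.
have Hrow : forall c1 c2, c1 \in S a b t -> c2 \in S a b t -> row c1 = row c2 -> col c1 < col c2 ->
    key1 (gUM t c1) <= key1 (gUM t c2) /\ (gUM t c1 = gUM t c2 -> (gUM t c1).2).
  move=> x y hx hy hr hc.
  have hR : x \in RS (S a b t) by apply: (RSI hx hy).
  have e1 : gUM t x = a.
    rewrite /gUM pm_in // /psig hR; apply: ruleL_s => //; apply: tr_in => //; exact: RS_LS.
  rewrite e1; split; last by move=> _; exact: Ha.
  by case/orP: (sin _ hy) => /eqP ->; rewrite ?Hab1.
have Hcol : forall c1 c2, c1 \in S a b t -> c2 \in S a b t -> col c1 = col c2 -> row c1 < row c2 ->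
    key1 (gUM t c1) <= key1 (gUM t c2) /\ (gUM t c1 = gUM t c2 -> ~~ (gUM t c1).2).
  move=> x y hx hy hc hr.
  have hU : y \in US (S a b t) by apply: (USI hy hx).
  have nR : y \notin RS (S a b t) by apply/negP => /d4; rewrite hU.
  have e2 : gUM t y = b.
    rewrite /gUM pm_in // /psig (negPf nR) hU; apply: ruleD_s => //; apply: tr_in => //; by rewrite DS_US.
  rewrite e2; split; last by move=> ->; rewrite Hb.
  by case/orP: (sin _ hx) => /eqP ->; rewrite ?Hab1.
exact: (@inner_tab _ _ _ key1 (gUM t) (S a b t) Hrow Hcol c1 c2 h1 h2).
Qed.

End UM.


Section Refl.
Variables (lam mu : seq nat).
Local Notation cell := (cell lam mu).
Variable F : {set cell}.

Definition colF (c : cell) := [set d in F | col d == col c].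
Definition above (c : cell) := #|[set d in F | (col d == col c) && (row d < row c)]|.
Definition nF (c : cell) := #|colF c|.
Definition refl (c : cell) : cell :=
  odflt c [pick d in F | (col d == col c) && (above d == (nF c).-1 - above c)].

Lemma above_lt c : c \in F -> above c < nF c.
Proof.
move=> hc; apply: proper_card; apply/properP; split.
  by apply/subsetP => d; rewrite !inE => /andP[-> /andP[-> _]].
by exists c; rewrite !inE ?hc ?eqxx // ltnn andbF.
Qed.

Lemma above_mono c d : c \in F -> d \in F -> col c = col d -> row c < row d -> above c < above d.
Proof.
move=> hc hd hcd hr; apply: proper_card; apply/properP; split.
  apply/subsetP => x; rewrite !inE => /andP[-> /andP[/eqP -> h]].
  by rewrite hcd eqxx /=; lia.
by exists c; rewrite !inE ?hc ?hcd ?eqxx ?hr // ltnn andbF.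
Qed.

Lemma above_inj c d : c \in F -> d \in F -> col c = col d -> above c = above d -> c = d.
Proof.
move=> hc hd hcd ha; case: (ltngtP (row c) (row d)) => hr.
- by have := above_mono hc hd hcd hr; lia.
- by have := above_mono hd hc (esym hcd) hr; lia.
- exact: cellE.
Qed.

Lemma colF_eq c d : col d = col c -> colF d = colF c.
Proof. by move=> h; apply/setP => x; rewrite !inE h. Qed.

Lemma above_surj c v : c \in F -> v < nF c ->
  exists d, [/\ d \in F, col d = col c & above d = v].
Proof.
move=> hc hv.
have U : uniq (map above (enum (colF c))).
  rewrite map_inj_in_uniq ?enum_uniq // => x y; rewrite !mem_enum !inE.
  move=> /andP[hx /eqP ex] /andP[hy /eqP ey]; apply: above_inj => //; by rewrite ex ey.
have Sub : {subset map above (enum (colF c)) <= iota 0 (nF c)}.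
  move=> v' /mapP[x]; rewrite mem_enum inE => /andP[hx /eqP ex] ->.
  rewrite mem_iota /= add0n; have -> : nF c = nF x by rewrite /nF (colF_eq ex).
  exact: above_lt.
have Sz : size (iota 0 (nF c)) <= size (map above (enum (colF c))).
  by rewrite size_iota size_map -cardE.
have [_ E] := uniq_min_size U Sub Sz.
have : v \in iota 0 (nF c) by rewrite mem_iota.
rewrite -E => /mapP[d]; rewrite mem_enum inE => /andP[hd /eqP ed] ->.
by exists d.
Qed.

Lemma refl_spec c : c \in F ->
  [/\ refl c \in F, col (refl c) = col c & above (refl c) = (nF c).-1 - above c].
Proof.
move=> hc; rewrite /refl; case: pickP => [d /andP[hd /andP[/eqP e1 /eqP e2]]|none] //=.
have hv : (nF c).-1 - above c < nF c by have := above_lt hc; lia.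
have [d [h1 h2 h3]] := above_surj hc hv.
by move: (none d); rewrite h1 h2 h3 !eqxx.
Qed.

Lemma refl_in c : c \in F -> refl c \in F.
Proof. by case/refl_spec. Qed.
Lemma refl_col c : c \in F -> col (refl c) = col c.
Proof. by case/refl_spec. Qed.

Lemma refl_K c : c \in F -> refl (refl c) = c.
Proof.
move=> hc; have [h1 h2 h3] := refl_spec hc.
have [g1 g2 g3] := refl_spec h1.
have en : nF (refl c) = nF c by rewrite /nF (colF_eq h2).
apply: above_inj => //; first by rewrite g2.
rewrite g3 en h3; have := above_lt hc; lia.
Qed.

Lemma refl_rev c d : c \in F -> d \in F -> col c = col d -> row c < row d ->
  row (refl d) < row (refl c).
Proof.
move=> hc hd hcd hr; have lt := above_mono hc hd hcd hr.
have [c1 c2 c3] := refl_spec hc; have [d1 d2 d3] := refl_spec hd.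
have en : nF d = nF c by rewrite /nF (colF_eq (esym hcd)).
have ac := above_lt hc; have ad := above_lt hd.
case: (ltngtP (row (refl d)) (row (refl c))) => // h.
- have e' : col (refl c) = col (refl d) by rewrite c2 d2.
  have := above_mono c1 d1 e' h; rewrite c3 d3 en; lia.
- have e : refl c = refl d by apply: cellE => //; rewrite c2 d2.
  by move: c3; rewrite e d3 en; lia.
Qed.
End Refl.


Section PsiM.
Variables (lam mu : seq nat).
Local Notation cell := (cell lam mu).
Definition FF (A : {set cell}) := A :\: (RS A :|: LS A).
Definition psim (A : {set cell}) (c : cell) : cell :=
  if c \in RS A then tr (RS A) (LS A) c else if c \in LS A then tr (LS A) (RS A) c
  else refl (FF A) c.

Lemma inFF A c : (c \in FF A) = [&& c \notin RS A, c \notin LS A & c \in A].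
Proof. by rewrite !inE negb_or andbA. Qed.

Lemma psim_props (A : {set cell}) c : (forall c, c \in RS A -> c \notin LS A) -> c \in A ->
  psim A c \in A /\ psim A (psim A c) = c.
Proof.
move=> dRL hc; have e1 := RS_LS A.
rewrite /psim; case: ifP => h1.
  have h := tr_in e1 h1; have nR : tr (RS A) (LS A) c \notin RS A.
    by apply/negP => /dRL; rewrite h.
  by rewrite (negPf nR) h tr_K // (LS_sub h).
case: ifP => h2.
  have h := tr_in (esym e1) h2.
  by rewrite h tr_K // (RS_sub h).
have hf : c \in FF A by rewrite inFF h1 h2 hc.
have r := refl_in hf; move: (r); rewrite inFF => /and3P[n1 n2 n3].
by rewrite (negPf n1) (negPf n2) refl_K.
Qed.
End PsiM.

Section MM.
Variables (lam mu : seq nat) (k : nat).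
Hypothesis Hlam : is_partition lam.
Hypothesis Hmu : is_partition mu.
Local Notation cell := (cell lam mu).
Local Notation filling := (filling lam mu k).

Variables (key1 key2 : letter k -> nat) (a b : letter k).
Hypothesis Hab1 : key1 b = (key1 a).+1.
Hypothesis Hbtw : forall z, z != a -> z != b -> (key1 z < key1 a) || (key1 b < key1 z).
Hypothesis H2a : key2 a = key1 b.
Hypothesis H2b : key2 b = key1 a.
Hypothesis H2z : forall z, z != a -> z != b -> key2 z = key1 z.
Hypothesis Ha : a.2 = false.
Hypothesis Hb : b.2 = false.

Definition mm (t : filling) : filling := pm (S a b t) (psim (S a b t)) t.

Section T.
Variable t : filling.
Hypothesis Ht : is_tableau key1 t.
Local Notation A := (S a b t).

Lemma k1ab' : key1 a < key1 b. Proof. by rewrite Hab1. Qed.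
Lemma key1_in' c : c \in A -> key1 a <= key1 (t c) <= key1 b.
Proof. by rewrite inSE => /orP[] /eqP ->; rewrite Hab1 leqnn ?leqnSn. Qed.
Lemma inS1' c : key1 a <= key1 (t c) <= key1 b -> c \in A.
Proof. exact: (btw_S Hlam Hmu Hab1 Hbtw H2a H2b). Qed.

Lemma tR c : c \in RS A -> t c = a.
Proof.
move=> hc; have [c' [h1 h2 h3]] := RSE hc.
exact: (rule_right Ht (@HAt _ _ _ a b t) k1ab' Hb (RS_sub hc) h1 h2 h3).
Qed.
Lemma tL c : c \in LS A -> t c = b.
Proof.
move=> hc; have [c' [h1 h2 h3]] := LSE hc.
exact: (rule_left Ht (@HAt _ _ _ a b t) k1ab' Ha (LS_sub hc) h1 h2 h3).
Qed.
Lemma dRL c : c \in RS A -> c \notin LS A.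
Proof.
move=> h; apply/negP => /tL; rewrite (tR h) => e.
by move: Hab1; rewrite e; slia.
Qed.

Lemma fr c1 c2 : c1 \in FF A -> c2 \in RS A -> col c1 = col c2 -> row c1 < row c2 -> False.
Proof.
move=> hf hR hc hr; have [w [hw1 hw2 hw3]] := RSE hR.
move: (hf); rewrite inFF => /and3P[n1 n2 h1].
have r1 : row c1 <= row w by slia.
have cc : col c1 <= col w by slia.
have [z [hz1 hz2]] := corner_ur Hlam Hmu r1 cc.
have zA : z \in A.
  have [k1 _] := andP (key1_in' h1); have [_ k2] := andP (key1_in' hw1).
  have m1 : key1 (t c1) <= key1 (t z) by apply: (tab_mono Hlam Hmu Ht); rewrite ?hz1 ?hz2.
  have m2 : key1 (t z) <= key1 (t w) by apply: (tab_mono Hlam Hmu Ht); rewrite ?hz1 ?hz2 -?hw2 ?leqnn ?(ltnW hr).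
  apply: inS1'; rewrite (leq_trans k1 m1) (leq_trans m2 k2) //.
by move/negP: n1; apply; apply: (RSI h1 zA); slia.
Qed.

Lemma fl c1 c2 : c1 \in LS A -> c2 \in FF A -> col c1 = col c2 -> row c1 < row c2 -> False.
Proof.
move=> hL hf hc hr; have [w [hw1 hw2 hw3]] := LSE hL.
move: (hf); rewrite inFF => /and3P[n1 n2 h2].
have r1 : row w <= row c2 by slia.
have cc : col w <= col c2 by slia.
have [z [hz1 hz2]] := corner_ll Hlam Hmu r1 cc.
have zA : z \in A.
  have [k1 _] := andP (key1_in' hw1); have [_ k2] := andP (key1_in' h2).
  have m1 : key1 (t w) <= key1 (t z) by apply: (tab_mono Hlam Hmu Ht); rewrite ?hz1 ?hz2.
  have m2 : key1 (t z) <= key1 (t c2) by apply: (tab_mono Hlam Hmu Ht); rewrite ?hz1 ?hz2.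
  apply: inS1'; rewrite (leq_trans k1 m1) (leq_trans m2 k2) //.
by move/negP: n2; apply; apply: (LSI h2 zA); slia.
Qed.

Lemma mm_tab : is_tableau key2 (mm t).
Proof.
have P c := @psim_props lam mu (S a b t) c dRL.
have sin c : c \in A -> (mm t c == a) || (mm t c == b).
  by move=> hc; rewrite /mm pm_in // -inSE; case: (P c hc).
have e1 := RS_LS A.
have sR c : c \in RS A -> mm t c = b.
  move=> hc; rewrite /mm pm_in ?(RS_sub hc) // /psim hc; apply: tL; exact: tr_in.
have sL c : c \in LS A -> mm t c = a.
  move=> hc; have nR : c \notin RS A by apply/negP => /dRL; rewrite hc.
  rewrite /mm pm_in ?(LS_sub hc) // /psim (negPf nR) hc; apply: tR; exact: tr_in.
have sF c : c \in FF A -> mm t c = t (refl (FF A) c).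
  move=> hc; move: (hc); rewrite inFF => /and3P[n1 n2 h].
  by rewrite /mm pm_in // /psim (negPf n1) (negPf n2).
have ab : a != b by apply/eqP => e; move: Hab1; rewrite e; slia.
apply: (tab_transfer Hlam Hmu Hab1 Hbtw H2a H2b H2z Ht).
- by move=> c hc; rewrite /mm pm_out.
- exact: sin.
move=> c1 c2 h1 h2.
have Hrow : forall c1 c2, c1 \in A -> c2 \in A -> row c1 = row c2 -> col c1 < col c2 ->
    key2 (mm t c1) <= key2 (mm t c2) /\ (mm t c1 = mm t c2 -> (mm t c1).2).
  move=> x y hx hy hr hc.
  rewrite (sR _ (RSI hx hy (esym hr) hc)) (sL _ (LSI hy hx hr hc)) H2a H2b Hab1.
  by split => // e; move: ab; rewrite e eqxx.
have Hcol : forall c1 c2, c1 \in A -> c2 \in A -> col c1 = col c2 -> row c1 < row c2 ->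
    key2 (mm t c1) <= key2 (mm t c2) /\ (mm t c1 = mm t c2 -> ~~ (mm t c1).2).
  move=> x y hx hy hc hr.
  have key : mm t y = b -> mm t x = b.
    move=> ey.
    case: (boolP (x \in RS A)) => xR; first exact: sR.
    case: (boolP (x \in LS A)) => xL.
      case: (boolP (y \in RS A)) => yR.
        have := tab_col Ht hc (ltnW hr); rewrite (tL xL) (tR yR) Hab1; slia.
      case: (boolP (y \in LS A)) => yL; first by move: ey; rewrite (sL _ yL) => e; move: ab; rewrite e eqxx.
      by exfalso; apply: (fl xL _ hc hr); rewrite inFF yR yL hy.
    have xF : x \in FF A by rewrite inFF xR xL hx.
    case: (boolP (y \in RS A)) => yR; first by exfalso; apply: (fr xF yR hc hr).
    case: (boolP (y \in LS A)) => yL; first by move: ey; rewrite (sL _ yL) => e; move: ab; rewrite e eqxx.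
    have yF : y \in FF A by rewrite inFF yR yL hy.
    move: ey; rewrite (sF _ xF) (sF _ yF) => ey.
    have rr := refl_rev xF yF hc hr.
    have hcc : col (refl (FF A) y) = col (refl (FF A) x) by rewrite !refl_col.
    have := tab_col Ht hcc (ltnW rr); rewrite ey.
    have : refl (FF A) x \in A by have := refl_in xF; rewrite inFF => /and3P[].
    rewrite inSE => /orP[] /eqP -> //; rewrite Hab1; slia.
  split; last by case/orP: (sin _ hx) => /eqP ->; rewrite ?Ha ?Hb.
  case/orP: (sin _ hy) => /eqP e.
    by rewrite e H2a; case/orP: (sin _ hx) => /eqP ->; rewrite ?H2a ?H2b ?Hab1.
  by rewrite e (key e).
exact: (@inner_tab _ _ _ key2 (mm t) (S a b t) Hrow Hcol c1 c2 h1 h2).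
Qed.

Lemma mm_S : S a b (mm t) = S a b t.
Proof. by apply: S_pm => c hc; case: (@psim_props lam mu (S a b t) c dRL hc). Qed.

Lemma mm_K : mm (mm t) = t.
Proof.
rewrite {1}/mm mm_S /mm; apply: pm_K => c hc;
  by case: (@psim_props lam mu (S a b t) c dRL hc).
Qed.

Lemma mm_count x : #|[set c | mm t c == x]| = #|[set c | t c == x]|.
Proof.
apply: (pm_count (psi' := psim (S a b t))) => c hc;
  by case: (@psim_props lam mu (S a b t) c dRL hc).
Qed.
End T.
End MM.


Section E.
Variables (lam mu : seq nat) (k : nat).
Hypothesis Hlam : is_partition lam.
Hypothesis Hmu : is_partition mu.
Local Notation cell := (cell lam mu).
Local Notation filling := (filling lam mu k).

Definition Tab (key : letter k -> nat) := {t : filling | is_tableau key t}.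
Definition E (key1 key2 : letter k -> nat) :=
  exists f : Tab key1 -> Tab key2, bijective f /\ forall t, dweight (val (f t)) = dweight (val t).

Lemma E_trans k1 k2 k3 : E k1 k2 -> E k2 k3 -> E k1 k3.
Proof.
move=> [f [bf wf]] [g [bg wg]]; exists (g \o f); split; first exact: bij_comp.
by move=> t /=; rewrite wg wf.
Qed.

Lemma is_tab_ext (k1 k2 : letter k -> nat) (t : filling) : k1 =1 k2 -> is_tableau k1 t = is_tableau k2 t.
Proof.
move=> e; rewrite /is_tableau; apply: eq_forallb => c1; apply: eq_forallb => c2.
by rewrite !e.
Qed.

Lemma E_ext k1 k2 : k1 =1 k2 -> E k1 k2.
Proof.
move=> e.
have f1 (t : Tab k1) : is_tableau k2 (val t) by rewrite -(is_tab_ext _ e); exact: valP.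
have f2 (t : Tab k2) : is_tableau k1 (val t) by rewrite (is_tab_ext _ e); exact: valP.
exists (fun t => exist _ (val t) (f1 t)); split => // .
exists (fun t => exist _ (val t) (f2 t)) => t; exact: val_inj.
Qed.

Lemma dweight_eq (s t : filling) :
  (forall x, #|[set c | s c == x]| = #|[set c | t c == x]|) -> dweight s = dweight t.
Proof.
move=> H; apply/ffunP => i; rewrite !ffunE.
have e (u : filling) y : #|[pred c | u c == y]| = #|[set c | u c == y]|.
  by apply: eq_card => c; rewrite inE.
by rewrite !e !H.
Qed.

Lemma E_maps k1 k2 (F G : filling -> filling) :
  (forall t, is_tableau k1 t -> is_tableau k2 (F t)) ->
  (forall t, is_tableau k2 t -> is_tableau k1 (G t)) ->
  (forall t, is_tableau k1 t -> G (F t) = t) ->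
  (forall t, is_tableau k2 t -> F (G t) = t) ->
  (forall t x, is_tableau k1 t -> #|[set c | F t c == x]| = #|[set c | t c == x]|) ->
  E k1 k2.
Proof.
move=> hF hG hGF hFG hW.
exists (fun t => exist _ (F (val t)) (hF _ (valP t))); split.
  exists (fun t => exist _ (G (val t)) (hG _ (valP t))) => t; apply: val_inj => /=.
    exact: hGF (valP t).
  exact: hFG (valP t).
move=> t /=; apply: dweight_eq => x; exact: hW (valP t).
Qed.

Lemma E_UM (key1 key2 : letter k -> nat) (a b : letter k) :
  key1 b = (key1 a).+1 ->
  (forall z, z != a -> z != b -> (key1 z < key1 a) || (key1 b < key1 z)) ->
  key2 a = key1 b -> key2 b = key1 a ->
  (forall z, z != a -> z != b -> key2 z = key1 z) ->
  a.2 = true -> b.2 = false -> E key1 key2.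
Proof.
move=> h1 h2 h3 h4 h5 h6 h7.
apply: (@E_maps _ _ (fUM a b) (gUM a b)).
- move=> t Ht; eapply fUM_tab; eassumption.
- move=> t Ht; eapply gUM_tab; eassumption.
- move=> t Ht; eapply gfUM; eassumption.
- move=> t Ht; eapply fgUM; eassumption.
- move=> t x Ht; eapply fUM_count; eassumption.
Qed.

Lemma mm_sym (a b : letter k) (s : filling) : mm b a s = mm a b s.
Proof. by rewrite /mm S_sym. Qed.

Lemma E_MM (key1 key2 : letter k -> nat) (a b : letter k) :
  key1 b = (key1 a).+1 ->
  (forall z, z != a -> z != b -> (key1 z < key1 a) || (key1 b < key1 z)) ->
  key2 a = key1 b -> key2 b = key1 a ->
  (forall z, z != a -> z != b -> key2 z = key1 z) ->
  a.2 = false -> b.2 = false -> E key1 key2.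
Proof.
move=> h1 h2 h3 h4 h5 h6 h7.
have g1 : key2 a = (key2 b).+1 by rewrite h3 h4.
have g2 : forall z, z != b -> z != a -> (key2 z < key2 b) || (key2 a < key2 z).
  by move=> z z1 z2; rewrite h5 // h3 h4; apply: h2.
have g3 : key1 b = key2 a by rewrite h3.
have g4 : key1 a = key2 b by rewrite h4.
have g5 : forall z, z != b -> z != a -> key1 z = key2 z by move=> z z1 z2; rewrite h5.
apply: (@E_maps _ _ (mm a b) (mm a b)).
- move=> t Ht; eapply mm_tab; eassumption.
- move=> t Ht; rewrite -(mm_sym a b t); eapply mm_tab; eassumption.
- move=> t Ht; eapply mm_K; eassumption.
- move=> t Ht; rewrite -(mm_sym a b t) -(mm_sym a b (mm b a t)); eapply mm_K; eassumption.
- move=> t x Ht; eapply mm_count; eassumption.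
Qed.

End E.


Section Keys.
Variable k : nat.

Definition pos (m : nat) (z : letter k) : nat := if z.2 then m + val z.1 else m - 1 - val z.1.
Definition Kf (m p : nat) (z : letter k) : nat :=
  if val z.1 < m then (if p <= pos m z then (pos m z).+1 else pos m z)
  else if z.2 then (2 * val z.1).+1 else if val z.1 == m then p else 2 * val z.1.

Lemma pos_inj m (z z' : letter k) : val z.1 < m -> val z'.1 < m -> pos m z = pos m z' -> z = z'.
Proof.
case: z => [[i hi] bi]; case: z' => [[j hj] bj]; rewrite /pos /= => h1 h2.
have E : i = j -> bi = bj -> (Ordinal hi, bi) = (Ordinal hj, bj).
  by move=> e1 e2; subst; congr pair; apply: val_inj.
move: E; case: bi; case: bj => E e; apply: E => //; slia.
Qed.

Lemma K00 : Kf 0 0 =1 @primed_key k.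
Proof.
case=> [[i hi] []]; rewrite /Kf /primed_key /=; first by rewrite addn1.
by case: (i =P 0) => [->|] //; rewrite addn0.
Qed.

Lemma Kkk : Kf k (2 * k) =1 @signed_key k.
Proof.
case=> [[i hi] []]; rewrite /Kf /signed_key /pos /= hi.
  by rewrite ifF //; apply/negbTE; rewrite -ltnNge; slia.
rewrite ifF; last by apply/negbTE; rewrite -ltnNge; slia.
slia.
Qed.

Lemma Kshift m : Kf m 0 =1 Kf m.+1 (2 * m.+1).
Proof.
case=> [[i hi] []]; rewrite /Kf /pos /=.
- case: (ltngtP i m) => h.
  + rewrite ltnS (ltnW h) ifF; first slia. apply/negbTE; rewrite -ltnNge; slia.
  + by rewrite ltnS leqNgt h.
  + subst; rewrite ltnS leqnn ifF; first slia. apply/negbTE; rewrite -ltnNge; slia.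
- case: (ltngtP i m) => h.
  + rewrite ltnS (ltnW h) ifF; first slia. apply/negbTE; rewrite -ltnNge; slia.
  + rewrite ltnS leqNgt h /=.
    case: (i =P m.+1) => [->|ne]; first by [].
    by [].
  + subst; rewrite ltnS leqnn; rewrite ifF; [slia | apply/negbTE; rewrite -ltnNge; slia].
Qed.
End Keys.

Section Chain.
Variables (lam mu : seq nat) (k : nat).
Hypothesis Hlam : is_partition lam.
Hypothesis Hmu : is_partition mu.
Local Notation E := (@E lam mu k).

Lemma Estep_gen m q (a : letter k) (Hm : m < k) : q < 2 * m -> val a.1 < m -> pos m a = q ->
  E (Kf m q.+1) (Kf m q).
Proof.
move=> hq ha hpa.
pose b : letter k := (Ordinal Hm, false).
have Ka1 : Kf m q.+1 a = q by rewrite /Kf ha hpa ltnn.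
have Ka2 : Kf m q a = q.+1 by rewrite /Kf ha hpa leqnn.
have Kb1 : Kf m q.+1 b = q.+1 by rewrite /Kf /= ltnn eqxx.
have Kb2 : Kf m q b = q by rewrite /Kf /= ltnn eqxx.
have isb (z : letter k) : val z.1 = m -> z.2 = false -> z = b.
  case: z => [[i hi] bz] /= e1 e2; subst; rewrite /b; congr pair; exact: val_inj.
have gen (z : letter k) : z != a -> z != b ->
    [/\ Kf m q z = Kf m q.+1 z & (Kf m q.+1 z < q) || (q.+1 < Kf m q.+1 z)].
  move=> za zb; rewrite /Kf.
  case: ifP => hz.
    have pq : pos m z != q.
      by apply/eqP => e; move/eqP: za; apply; apply: (pos_inj hz ha); rewrite e hpa.
    case: (ltngtP (pos m z) q) => h; last by rewrite h eqxx in pq.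
      by split => //; apply/orP; left.
    by split => //; apply/orP; right; rewrite ltnS.
  have hz' : m <= val z.1 by rewrite leqNgt hz.
  case: ifP => hb.
    split => //; apply/orP; right; slia.
  case: ifP => hm.
    by move/eqP: hm => hm; move/eqP: zb; case; apply: isb => //; move/negbT: hb; case: (z.2).
  have hm' : val z.1 != m by rewrite hm.
  have hm'' : m < val z.1 by rewrite ltn_neqAle eq_sym hm' hz'.
  split => //; apply/orP; right; slia.
have h1 : Kf m q.+1 b = (Kf m q.+1 a).+1 by rewrite Ka1 Kb1.
have h2 : forall z, z != a -> z != b -> (Kf m q.+1 z < Kf m q.+1 a) || (Kf m q.+1 b < Kf m q.+1 z).
  by move=> z za zb; rewrite Ka1 Kb1; case: (gen z za zb).
have h3 : Kf m q a = Kf m q.+1 b by rewrite Ka2 Kb1.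
have h4 : Kf m q b = Kf m q.+1 a by rewrite Ka1 Kb2.
have h5 : forall z, z != a -> z != b -> Kf m q z = Kf m q.+1 z.
  by move=> z za zb; case: (gen z za zb).
case ea : (a.2).
  exact: (E_UM Hlam Hmu h1 h2 h3 h4 h5 ea).
exact: (E_MM Hlam Hmu h1 h2 h3 h4 h5 ea).
Qed.

Lemma Estep m q : m < k -> q < 2 * m -> E (Kf m q.+1) (Kf m q).
Proof.
move=> Hm hq; case: (ltnP q m) => hqm.
  have hi : m - 1 - q < k by slia.
  apply: (@Estep_gen m q (Ordinal hi, false) Hm hq); rewrite /pos /=; slia.
have hi : q - m < k by slia.
apply: (@Estep_gen m q (Ordinal hi, true) Hm hq); rewrite /pos /=; slia.
Qed.

Lemma E_refl key : E key key.
Proof. exact: E_ext. Qed.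

Lemma Einner m q : m < k -> q <= 2 * m -> E (Kf m q) (Kf m 0).
Proof.
move=> Hm; elim: q => [|q IH] hq; first exact: E_refl.
apply: E_trans (Estep Hm hq) (IH (ltnW hq)).
Qed.

Lemma Estage m : m <= k -> E (Kf 0 0) (Kf m (2 * m)).
Proof.
elim: m => [|m IH] hm; first exact: E_refl.
apply: E_trans (IH (ltnW hm)) _.
apply: E_trans (Einner hm (leqnn _)) _.
exact: E_ext (@Kshift k m).
Qed.

Lemma E_final : E (@primed_key k) (@signed_key k).
Proof.
have e1 : E (@primed_key k) (Kf 0 0) by apply: E_ext => x; rewrite K00.
have e2 : E (Kf k (2 * k)) (@signed_key k) by apply: E_ext => x; rewrite Kkk.
exact: E_trans e1 (E_trans (Estage (leqnn k)) e2).
Qed.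

End Chain.


Theorem corollary4p2 (lam mu : seq nat) (k : nat) :
  is_partition lam -> is_partition mu -> subpart mu lam ->
  exists f : primed_tab lam mu k -> signed_tab lam mu k,
    bijective f /\ forall t, dweight (val (f t)) = dweight (val t).
Proof.
move=> Hl Hm _; exact: (E_final k Hl Hm).
Qed.
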